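(* Let $M$ be a $po$-$\Gamma$-semigroup. Then $M$ is completely regular if and only if for every $a\in M$ there exist $x\in M$ and $\gamma,\mu,\rho,\xi\in\Gamma$ such that $$a\le (a\gamma a)\mu x\rho (a\xi a).$$
   Context: A $po$-$\Gamma$-semigroup is a triple $(M,\Gamma,\le)$ where $M,\Gamma$ are nonempty sets with a map $M\times\Gamma\times M\to M$, $(a,\gamma,b)\mapsto a\gamma b$, satisfying $(a\gamma b)\mu c=a\gamma(b\mu c)$ for all $a,b,c\in M$, $\gamma,\mu\in\Gamma$, and $\le$ is a partial order on $M$ such that $a\le b$ implies $a\gamma c\le b\gamma c$ and $c\gamma a\le c\gamma b$ for all $c\in M$, $\gamma\in\Gamma$. For $A,B\subseteq M$, $A\Gamma B=\{a\gamma b: a\in A,\gamma\in\Gamma,b\in B\}$ (with $a\Gamma B$ meaning $\{a\}\Gamma B$, etc.), and $(A]=\{t\in M: t\le a \text{ for some } a\in A\}$. $M$ is regular if $a\in(a\Gamma M\Gamma a]$ for all $a\in M$; left regular if $a\in(M\Gamma a\Gamma a]$ for all $a\in M$; right regular if $a\in(a\Gamma a\Gamma M]$ for all $a\in M$; completely regular if it is regular, left regular and right regular. *)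

(* Defs.v *)
Record poGammaSemigroup : Type := {
  carrier : Type;
  gamma : Type;
  carrier_inhabited : inhabited carrier;
  gamma_inhabited : inhabited gamma;
  op : carrier -> gamma -> carrier -> carrier;
  le : carrier -> carrier -> Prop;
  op_assoc : forall (a b c : carrier) (g m : gamma),
      op (op a g b) m c = op a g (op b m c);
  le_refl : forall a, le a a;
  le_antisym : forall a b, le a b -> le b a -> a = b;
  le_trans : forall a b c, le a b -> le b c -> le a c;
  le_compat_r : forall (a b c : carrier) (g : gamma), le a b -> le (op a g c) (op b g c);
  le_compat_l : forall (a b c : carrier) (g : gamma), le a b -> le (op c g a) (op c g b)
}.

Section Defs.
Variable M : poGammaSemigroup.

Definition down (A : carrier M -> Prop) : carrier M -> Prop :=
  fun t => exists a, A a /\ le M t a.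

Definition aGMGa (a : carrier M) : carrier M -> Prop :=
  fun t => exists (g : gamma M) (x : carrier M) (m : gamma M), t = op M (op M a g x) m a.
Definition MGaGa (a : carrier M) : carrier M -> Prop :=
  fun t => exists (x : carrier M) (g m : gamma M), t = op M (op M x g a) m a.
Definition aGaGM (a : carrier M) : carrier M -> Prop :=
  fun t => exists (g m : gamma M) (x : carrier M), t = op M (op M a g a) m x.

Definition regular : Prop := forall a, down (aGMGa a) a.
Definition left_regular : Prop := forall a, down (MGaGa a) a.
Definition right_regular : Prop := forall a, down (aGaGM a) a.
Definition completely_regular : Prop := regular /\ left_regular /\ right_regular.
End Defs.

(* Main.v *)
Require Import Defs.

Theorem proposition3 (M : poGammaSemigroup) :
  completely_regular M <->
  (forall a : carrier M, exists (x : carrier M) (g m r k : gamma M),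
      le M a (op M (op M (op M a g a) m x) r (op M a k a))).
Proof.
  split.
  - intros [HR [HL HRR]] a.
    destruct (HR a) as [t [[g [x [m ->]]] H1]].
    destruct (HL a) as [t [[y [al [be ->]]] H2]].
    destruct (HRR a) as [t [[de [ep [z ->]]] H3]].
    exists (op M z g (op M x m y)), de, ep, al, be.
    eapply le_trans; [exact H1|].
    eapply le_trans.
    { apply le_compat_l. exact H2. }
    eapply le_trans.
    { apply le_compat_r. apply le_compat_r. exact H3. }
    rewrite !op_assoc. apply le_refl.
  - intros H. split; [|split]; intros a; destruct (H a) as [x [g [m [r [k Ha]]]]].
    + exists (op M (op M a g (op M (op M a m x) r a)) k a). split; [|rewrite ?op_assoc; rewrite ?op_assoc in Ha; exact Ha].
      exists g, (op M (op M a m x) r a), k. rewrite !op_assoc. reflexivity.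
    + eexists. split; [|rewrite ?op_assoc; rewrite ?op_assoc in Ha; exact Ha].
      exists (op M (op M a g a) m x), r, k. rewrite !op_assoc. reflexivity.
    + eexists. split; [|rewrite ?op_assoc; rewrite ?op_assoc in Ha; exact Ha].
      exists g, m, (op M x r (op M a k a)). rewrite !op_assoc. reflexivity.
Qed.
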